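(* Let $Q_t$ and $Q'_t$ be two instances of the Data Collection process with the same graph, sink, sources, rate vector $\bm{J}$ and parameter $\beta$, with initial states satisfying $Q_0\preceq Q'_0$. Then for every $t\ge0$, $Q_t$ is stochastically dominated by $Q'_t$; in particular $\Pr[Q_t(v)>0]\le\Pr[Q'_t(v)>0]$ for all $v\in V\setminus\{u_s\}$.
   Context: Partial order on $(\mathbb{N}\cup\{0\})^{V\setminus\{u_s\}}$: $\bm{x}\preceq\bm{y}$ iff $\bm{x}_v\le\bm{y}_v$ for all $v$. A function $f$ on this set is increasing if $\bm{x}\preceq\bm{y}$ implies $f(\bm{x})\le f(\bm{y})$. A random vector $X$ is stochastically dominated by $Y$ if $\mathbb{E}[f(X)]\le\mathbb{E}[f(Y)]$ for every increasing $f$. Data Collection process: on a connected undirected graph $G=(V,E,w)$ with positive weights and $d_u=\sum_{v:(u,v)\in E}w_{uv}$, fix a sink $u_s\in V$ and a set of sources $V_s\subseteq V\setminus\{u_s\}$, with relative rate vector $\bm{J}$ ($\bm{J}_v>0$ for $v\in V_s$, $0$ for other $v\ne u_s$, $\bm{J}_{u_s}=-\sum_{v\ne u_s}\bm{J}_v$) and $\beta>0$ with $\beta\bm{J}_v\le1$. The process is the discrete-time Markov chain $\{Q_t\}$ on $(\mathbb{N}\cup\{0\})^{V\setminus\{u_s\}}$ ($Q_t(v)$ = queue size at $v$) where at each step each $v\in V_s$ independently generates a new packet with probability $\beta\bm{J}_v$ into its queue, and each $u\ne u_s$ with nonempty queue picks one packet and a neighbor $v$ with probability $w_{uv}/d_u$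 and transmits the packet to $v$ (added to $v$'s queue if $v\ne u_s$, removed from the system if $v=u_s$). *)

(* Defs.v *)
From HB Require Import structures.
From mathcomp Require Import all_boot all_order all_algebra.
Set Implicit Arguments. Unset Strict Implicit. Unset Printing Implicit Defensive.
Import Order.TTheory GRing.Theory Num.Theory.
Local Open Scope ring_scope.

Definition NS (V : finType) (us : V) : finType := {v : V | v != us}.

Definition state (V : finType) (us : V) := NS us -> nat.

Definition state_le (V : finType) (us : V) (x y : state us) : Prop :=
  forall v, (x v <= y v)%N.

Definition increasing (R : realFieldType) (V : finType) (us : V)
  (f : state us -> R) : Prop :=
  forall x y : state us, state_le x y -> f x <= f y.

Definition deg (R : realFieldType) (V : finType) (E : rel V) (w : V -> V -> R)
  (u : V) : R := \sum_(v | E u v) w u v.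

(* Next state given current state x, generation outcomes g, and chosen
   neighbours c (c u is only relevant when x u > 0). *)
Definition next (V : finType) (us : V) (x : state us)
  (g : {ffun NS us -> bool}) (c : {ffun NS us -> V}) : state us :=
  fun v => (x v + g v - (0 < x v) + \sum_(u : NS us | (0 < x u) && (c u == val v)) 1)%N.

Definition gen_prob (R : realFieldType) (V : finType) (us : V) (beta : R)
  (J : V -> R) (g : {ffun NS us -> bool}) : R :=
  \prod_(v : NS us) (if g v then beta * J (val v) else 1 - beta * J (val v)).

(* Probability of the neighbour choices; empty queues make a dummy
   deterministic choice (c u = u). *)
Definition choice_prob (R : realFieldType) (V : finType) (E : rel V)
  (w : V -> V -> R) (us : V) (x : state us) (c : {ffun NS us -> V}) : R :=
  \prod_(u : NS us)
    (if (0 < x u)%N then (if E (val u) (c u) then w (val u) (c u) / deg E w (val u) else 0)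
     else (c u == val u)%:R).

(* One-step transition operator: (P f)(x) = E[f(Q_{t+1}) | Q_t = x]. *)
Definition Pstep (R : realFieldType) (V : finType) (E : rel V) (w : V -> V -> R)
  (us : V) (beta : R) (J : V -> R) (f : state us -> R) (x : state us) : R :=
  \sum_(g : {ffun NS us -> bool}) \sum_(c : {ffun NS us -> V})
     gen_prob beta J g * choice_prob E w x c * f (next x g c).

(* expect t f x = E[f(Q_t)] for the process started at Q_0 = x. *)
Fixpoint expect (R : realFieldType) (V : finType) (E : rel V) (w : V -> V -> R)
  (us : V) (beta : R) (J : V -> R) (t : nat) (f : state us -> R) (x : state us) : R :=
  match t with
  | 0%N => f x
  | t'.+1 => Pstep E w beta J (expect E w beta J t' f) x
  end.

Definition prob_nonempty (R : realFieldType) (V : finType) (E : rel V)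
  (w : V -> V -> R) (us : V) (beta : R) (J : V -> R) (t : nat) (x : state us)
  (v : NS us) : R :=
  expect E w beta J t (fun y : state us => ((0 < y v)%N)%:R) x.

(* Main.v *)
Require Import Defs.
From HB Require Import structures.
From mathcomp Require Import all_boot all_order all_algebra.
From mathcomp Require Import zify ring lra.
From Stdlib Require Import FunctionalExtensionality.
Set Implicit Arguments. Unset Strict Implicit. Unset Printing Implicit Defensive.
Import Order.TTheory GRing.Theory Num.Theory.
Local Open Scope ring_scope.

Lemma sum1_sub (I : finType) (P Q : pred I) :
  (forall i, P i -> Q i) -> (\sum_(i | P i) 1 <= \sum_(i | Q i) 1)%N.
Proof.
move=> PQ; rewrite big_mkcond [X in (_ <= X)%N]big_mkcond /=.
apply: leq_sum => i _; case: (boolP (P i)) => [/PQ -> //|_].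
by case: (Q i).
Qed.

Lemma next_mono (V : finType) (us : V) (x y : state us) (g : {ffun NS us -> bool}) (c c' : {ffun NS us -> V}) :
  state_le x y ->
  (forall i, (0 < x i)%N -> (0 < y i)%N /\ c i = c' i) ->
  state_le (Defs.next x g c) (Defs.next y g c').
Proof.
move=> hxy hc v; rewrite /Defs.next; apply: leq_add.
  have := hxy v; case: (x v) => [|a] /=; case: (y v) => [|b] //=.
  - move=> _; rewrite subn0; lia.
  - move=> h; lia.
apply: sum1_sub => i /andP[xi /eqP ci].
by have [-> <-] := hc i xi; rewrite ci eqxx.
Qed.


Definition upd (V : finType) (us : V) (c : {ffun NS us -> V}) (u : NS us) :
  {ffun NS us -> V} := [ffun i => if i == u then val u else c i].
Definition setc (V : finType) (us : V) (c : {ffun NS us -> V}) (u : NS us) (a : V) :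
  {ffun NS us -> V} := [ffun i => if i == u then a else c i].
Definition inc (V : finType) (us : V) (x : state us) (u : NS us) : state us :=
  fun v => (x v + (v == u))%N.
Definition qch (R : realFieldType) (V : finType) (E : rel V) (w : V -> V -> R) (u : V) (a : V) : R :=
  if E u a then w u a / deg E w u else 0.

Lemma cp_same (R : realFieldType) (V : finType) (E : rel V) (w : V -> V -> R) (us : V)
  (x y : state us) c :
  (forall i, (0 < x i)%N = (0 < y i)%N) -> choice_prob E w x c = choice_prob E w y c.
Proof. by move=> h; apply: eq_bigr => i _; rewrite h. Qed.

Lemma cp_split (R : realFieldType) (V : finType) (E : rel V) (w : V -> V -> R) (us : V)
  (x : state us) (u : NS us) c :
  x u = 0%N -> choice_prob E w (inc x u) c = qch E w (val u) (c u) * choice_prob E w x (upd c u).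
Proof.
move=> xu; rewrite /choice_prob (bigD1 u) //= [in RHS](bigD1 u) //=.
rewrite /inc eqxx xu /= /upd ffunE eqxx eqxx mul1r /qch; congr (_ * _).
apply: eq_bigr => i /negbTE hi; by rewrite ffunE hi addn0.
Qed.

Lemma sum_upd (R : realFieldType) (V : finType) (us : V) (u : NS us) (q : V -> R)
  (G : {ffun NS us -> V} -> R) :
  \sum_(c : {ffun NS us -> V}) q (c u) * G (upd c u) =
  \sum_(c0 : {ffun NS us -> V}) ((c0 u == val u)%:R * (\sum_a q a)) * G c0.
Proof.
rewrite (partition_big (fun c => upd c u) predT) //=.
apply: eq_bigr => c0 _.
rewrite (eq_bigr (fun c : {ffun NS us -> V} => q (c u) * G c0)); last by move=> c; rewrite ?andTb => /eqP ->.
rewrite -big_distrl /=; congr (_ * _).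
have [e|ne] := eqVneq (c0 u) (val u).
  rewrite mul1r (reindex_onto (fun a => setc c0 u a) (fun c => c u)) /=.
    apply: eq_big => [a|a _]; last by rewrite /setc ffunE eqxx.
    rewrite /setc ffunE eqxx eqxx andbT.
    apply/eqP/ffunP => i; rewrite /upd !ffunE; case: eqP => [->|//]; by rewrite e.
  move=> c /eqP <-; apply/ffunP => i; rewrite /setc /upd !ffunE.
  by case: eqP => [->|].
rewrite mul0r big_pred0 // => c; apply/eqP => h.
by move: ne; rewrite -h /upd ffunE eqxx eqxx.
Qed.


Lemma deg_ge0 (R : realFieldType) (V : finType) (E : rel V) (w : V -> V -> R) u :
  (forall a b, E a b -> 0 < w a b) -> 0 <= deg E w u.
Proof. by move=> hw; apply: sumr_ge0 => v /hw /ltW. Qed.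

Lemma qch_ge0 (R : realFieldType) (V : finType) (E : rel V) (w : V -> V -> R) u a :
  (forall a b, E a b -> 0 < w a b) -> 0 <= qch E w u a.
Proof.
move=> hw; rewrite /qch; case: (boolP (E u a)) => // h.
by apply: divr_ge0; [exact: ltW (hw _ _ h)|exact: deg_ge0].
Qed.

Lemma qch_sum (R : realFieldType) (V : finType) (E : rel V) (w : V -> V -> R) u :
  deg E w u != 0 -> \sum_a qch E w u a = 1.
Proof.
move=> hd; rewrite /qch -big_mkcond /= -big_distrl /=.
by rewrite -/(deg E w u) divff.
Qed.

Lemma cp_ge0 (R : realFieldType) (V : finType) (E : rel V) (w : V -> V -> R) (us : V)
  (x : state us) c :
  (forall a b, E a b -> 0 < w a b) -> 0 <= choice_prob E w x c.
Proof.
move=> hw; apply: prodr_ge0 => i _; case: ifP => _; last exact: ler0n.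
exact: (qch_ge0 (val i) (c i) hw).
Qed.


Lemma Pstep_inc (R : realFieldType) (V : finType) (E : rel V) (w : V -> V -> R) (us : V)
  (beta : R) (J : V -> R) (f : state us -> R) (x : state us) (u : NS us) :
  (forall a b, E a b -> 0 < w a b) ->
  (forall u : NS us, deg E w (val u) != 0) ->
  (forall g, 0 <= @gen_prob R V us beta J g) ->
  increasing f ->
  Pstep E w beta J f x <= Pstep E w beta J f (inc x u).
Proof.
move=> hw hd hg hf; rewrite /Pstep; apply: ler_sum => g _.
under eq_bigr do rewrite -mulrA.
under [X in _ <= X]eq_bigr do rewrite -mulrA.
rewrite -!big_distrr /=; apply: ler_wpM2l; first exact: hg.
have [xu|xu] := posnP (x u); last first.
  apply: ler_sum => c _.
  rewrite (@cp_same _ _ E w us x (inc x u)); last first.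
    move=> i; rewrite /inc; case: eqP => [->|]; last by rewrite addn0.
    by rewrite xu addn1.
  apply: ler_wpM2l; first exact: cp_ge0.
  apply: hf; apply: next_mono => [v|i xi]; first by rewrite /inc leq_addr.
  by split=> //; rewrite /inc (leq_trans xi) ?leq_addr.
apply: (@le_trans _ _ (\sum_(c : {ffun NS us -> V}) qch E w (val u) (c u) *
   (choice_prob E w x (upd c u) * f (Defs.next x g (upd c u))))).
  rewrite (sum_upd u (qch E w (val u))
     (fun c0 => choice_prob E w x c0 * f (Defs.next x g c0))) qch_sum // .
  apply: ler_sum => c _; rewrite mulr1.
  have [e|ne] := eqVneq (c u) (val u); first by rewrite mul1r.
  by rewrite mul0r /choice_prob (bigD1 u) //= xu /= (negbTE ne) !mul0r.
apply: ler_sum => c _; rewrite cp_split // -mulrA.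
apply: ler_wpM2l; first exact: qch_ge0.
apply: ler_wpM2l; first exact: cp_ge0.
apply: hf; apply: next_mono => [v|i xi]; first by rewrite /inc leq_addr.
split; first by rewrite /inc (leq_trans xi) ?leq_addr.
rewrite /upd ffunE; case: eqP => // ei; by move: xi; rewrite ei xu.
Qed.


Lemma Pstep_mono (R : realFieldType) (V : finType) (E : rel V) (w : V -> V -> R) (us : V)
  (beta : R) (J : V -> R) (f : state us -> R) :
  (forall a b, E a b -> 0 < w a b) ->
  (forall u : NS us, deg E w (val u) != 0) ->
  (forall g, 0 <= @gen_prob R V us beta J g) ->
  increasing f -> increasing (Pstep E w beta J f).
Proof.
move=> hw hd hg hf x y hxy.
move: {2}(\sum_v (y v - x v))%N (erefl (\sum_v (y v - x v))%N) => n.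
elim: n x hxy => [|n IH] x hxy hn.
  have -> : x = y; last exact: lexx.
  apply: functional_extensionality => v; apply/eqP; rewrite eqn_leq hxy /=.
  move/eqP: hn; rewrite sum_nat_eq0 => /forallP /(_ v) /implyP /(_ isT).
  by rewrite subn_eq0.
have [/existsP[u hu]|hno] := boolP [exists u, (x u < y u)%N].
  apply: (le_trans (@Pstep_inc R V E w us beta J f x u hw hd hg hf)).
  apply: IH.
    by move=> v; rewrite /inc; case: eqP => [->|]; rewrite ?addn1 ?addn0.
  move: hn; rewrite (bigD1 u) //= [in X in _ -> X](bigD1 u) //=.
  move=> hn'; rewrite /inc eqxx.
  rewrite (eq_bigr (fun v => y v - x v)%N); last first.
    by move=> v /negbTE hv; rewrite hv addn0.
  rewrite /= addn1; lia.
exfalso; move: hn; have -> : (\sum_v (y v - x v) = 0)%N; last by [].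
apply/eqP; rewrite sum_nat_eq0; apply/forallP => v; apply/implyP => _.
rewrite subn_eq0; move/existsPn: hno => /(_ v); rewrite -leqNgt.
move=> h; exact: h.
Qed.

Lemma expect_mono (R : realFieldType) (V : finType) (E : rel V) (w : V -> V -> R) (us : V)
  (beta : R) (J : V -> R) (f : state us -> R) t :
  (forall a b, E a b -> 0 < w a b) ->
  (forall u : NS us, deg E w (val u) != 0) ->
  (forall g, 0 <= @gen_prob R V us beta J g) ->
  increasing f -> increasing (expect E w beta J t f).
Proof.
move=> hw hd hg hf; elim: t => [|t IH] //=.
exact: Pstep_mono.
Qed.


Theorem claim1 (R : realFieldType) (V : finType) (E : rel V) (w : V -> V -> R)
  (us : V) (Vs : {set V}) (J : V -> R) (beta : R)
  (* connected undirected graph with positive edge weights *)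
  (E_sym : symmetric E) (E_irr : irreflexive E)
  (E_conn : forall u v, connect E u v)
  (w_sym : forall u v, w u v = w v u)
  (w_pos : forall u v, E u v -> 0 < w u v)
  (* sources and rates *)
  (us_notin : us \notin Vs)
  (J_src : forall v, v \in Vs -> 0 < J v)
  (J_other : forall v, v \notin Vs -> v != us -> J v = 0)
  (J_sink : J us = - \sum_(v | v != us) J v)
  (beta_pos : 0 < beta)
  (beta_le : forall v, v != us -> beta * J v <= 1)
  (x0 x0' : state us) (hx : state_le x0 x0') :
  forall t : nat,
    (forall f : state us -> R, increasing f ->
       expect E w beta J t f x0 <= expect E w beta J t f x0') /\
    (forall v : NS us,
       prob_nonempty E w beta J t x0 v <= prob_nonempty E w beta J t x0' v).
Proof.
have hd : forall u : NS us, deg E w (val u) != 0.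
  move=> u; have hu : val u != us := valP u.
  have /connectP[p hp hl] := E_conn (val u) us.
  case: p hp hl => [|a p] /=. { move=> _ e; exfalso; move/negP: hu; apply; apply/eqP; exact: (esym e). }
  move=> /andP[ha _] _; rewrite /deg (bigD1 a) //=; apply/lt0r_neq0.
  apply: ltr_pwDl; first exact: w_pos.
  by apply: sumr_ge0 => v /andP[/w_pos/ltW].
have hg : forall g, 0 <= @gen_prob R V us beta J g.
  move=> g; apply: prodr_ge0 => v _.
  have hv : val v != us := valP v.
  have hJ : 0 <= J (val v).
    case: (boolP (val v \in Vs)) => [/J_src/ltW //|h]; by rewrite J_other.
  case: (g v); first by apply: mulr_ge0 => //; exact: ltW.
  by rewrite subr_ge0; exact: beta_le.
move=> t; split.
  move=> f hf; exact: (expect_mono t w_pos hd hg hf).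
move=> v; rewrite /prob_nonempty; apply: (expect_mono t w_pos hd hg) => //.
move=> x y hxy; rewrite ler_nat.
have := hxy v; case: (x v) => [|a] //=; case: (y v) => [|b] //=.
Qed.
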